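(* Let $b,\beta_1,\beta_2,\gamma,\alpha,\lambda,\varepsilon_1,\varepsilon_2$ be positive real numbers and $\beta=\beta_1+\beta_2$. Consider the planar system $$s'=b+\gamma+(\varepsilon_2-b-\beta-\gamma)s-\gamma i-\varepsilon_2 s^2+(\varepsilon_1-\varepsilon_2-\lambda)is,$$ $$i'=\beta_1 s+(\varepsilon_2-\varepsilon_1-\alpha-b)i+(\lambda-\varepsilon_2)is+(\varepsilon_1-\varepsilon_2)i^2,$$ and let $\overset{o}{D}_1$ be the interior of $D_1=\{(s,i): s\ge0,\ i\ge0,\ s+i\le1\}$. Then every nondegenerate rest point of this system in $\overset{o}{D}_1$ is hyperbolic.
   Context: A rest point is nondegenerate if all eigenvalues of the linearization there are nonzero, and hyperbolic if all these eigenvalues have nonzero real parts. *)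

(* Defs.v *)
From HB Require Import structures.
From mathcomp Require Import all_boot all_order all_algebra.
From mathcomp Require Import all_classical all_reals all_analysis.
From mathcomp Require Import complex.
Set Implicit Arguments. Unset Strict Implicit. Unset Printing Implicit Defensive.
Import Order.TTheory GRing.Theory Num.Theory.
Import numFieldNormedType.Exports.
Local Open Scope ring_scope.
Local Open Scope classical_set_scope.

Section Defs.
Variable R : realType.
Variables b beta1 beta2 gamma alpha lambda eps1 eps2 : R.

Definition beta := beta1 + beta2.

Definition fs (s i : R) : R :=
  b + gamma + (eps2 - b - beta - gamma) * s - gamma * i - eps2 * s ^+ 2
  + (eps1 - eps2 - lambda) * i * s.

Definition fi (s i : R) : R :=
  beta1 * s + (eps2 - eps1 - alpha - b) * i + (lambda - eps2) * i * s
  + (eps1 - eps2) * i ^+ 2.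

Definition sys_rest_point (p : R * R) : Prop := fs p.1 p.2 = 0 /\ fi p.1 p.2 = 0.

Definition jacobian (p : R * R) : 'M[R]_2 :=
  \matrix_(k < 2, l < 2)
    (let f := if k == 0 :> nat then fs else fi in
     if l == 0 :> nat then derive1 (fun s => f s p.2) p.1
     else derive1 (fun i => f p.1 i) p.2).

Definition lin_eigenvalue (p : R * R) (z : R[i]) : bool :=
  eigenvalue (map_mx (fun x : R => (x%:C)%C) (jacobian p)) z.

Definition sys_nondegenerate (p : R * R) : Prop :=
  forall z : R[i], lin_eigenvalue p z -> z != 0.

Definition sys_hyperbolic (p : R * R) : Prop :=
  forall z : R[i], lin_eigenvalue p z -> Re z != 0.

End Defs.

Definition D1 (R : realType) : set (R * R) :=
  [set p | 0 <= p.1 /\ 0 <= p.2 /\ p.1 + p.2 <= 1].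

(* Main.v *)
Require Import Defs.
From HB Require Import structures.
From mathcomp Require Import all_boot all_order all_algebra.
From mathcomp Require Import all_classical all_reals all_analysis.
From mathcomp Require Import complex ring lra.
Import Order.TTheory GRing.Theory Num.Theory.
Import numFieldNormedType.Exports.
Local Open Scope ring_scope.
Local Open Scope classical_set_scope.

Lemma int_D1 (R : realType) (p : R * R) : interior (@D1 R) p ->
  0 < p.1 /\ 0 < p.2 /\ p.1 + p.2 < 1.
Proof.
case: p => s i; rewrite /interior /= => /nbhs_ballP [e e0 he].
have bh : forall x y, `|s - x| < e -> `|i - y| < e -> D1 (x, y).
  move=> x y h1 h2; apply: he; split => /=; by rewrite -ball_normE.
have e2 : 0 < e / 2 by rewrite divr_gt0.
have h2 : `|e / 2| < e by rewrite gtr0_norm // ltr_pdivrMr // ltr_pMr //; lra.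
have h2' : `|- (e / 2)| < e by rewrite normrN.
have [_ [_ A]] := bh (s + e/2) i ltac:(by rewrite opprD addrA subrr add0r) ltac:(by rewrite subrr normr0).
have [B _] := bh (s - e/2) i ltac:(by rewrite opprB addrC subrK) ltac:(by rewrite subrr normr0).
have [_ [C _]] := bh s (i - e/2) ltac:(by rewrite subrr normr0) ltac:(by rewrite opprB addrC subrK).
simpl in *; split; [lra|split; lra].
Qed.
Lemma quad_deriv (R : realType) (A B C x : R) :
  derive1 (fun y => A + B * y + C * y ^+ 2) x = B + 2 * C * x.
Proof.
have -> : (fun y => A + B * y + C * y ^+ 2) = horner (A%:P + B *: 'X + C *: 'X^2).
  by apply/funext => y; rewrite !hornerE.
rewrite -derivE /= !derivD derivC !derivZ derivX derivXn /= !hornerE.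
ring.
Qed.

Lemma trJ (R : realType) b beta1 beta2 gamma alpha lambda eps1 eps2 (p : R * R) :
  \tr (Defs.jacobian b beta1 beta2 gamma alpha lambda eps1 eps2 p) =
   ((eps2 - b - beta beta1 beta2 - gamma) - 2 * eps2 * p.1 + (eps1-eps2-lambda) * p.2)
  + ((eps2-eps1-alpha-b) + (lambda-eps2) * p.1 + 2 * (eps1-eps2) * p.2).
Proof.
rewrite /mxtrace !big_ord_recr big_ord0 /= !mxE /=.
have -> : (fun s => fs b beta1 beta2 gamma lambda eps1 eps2 s p.2) =
   (fun y => (b + gamma - gamma * p.2) + ((eps2 - b - beta beta1 beta2 - gamma) + (eps1 - eps2 - lambda) * p.2) * y + (- eps2) * y ^+ 2).
  by apply/funext => y; rewrite /fs; ring.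
have -> : (fun i => fi b beta1 alpha lambda eps1 eps2 p.1 i) =
   (fun y => (beta1 * p.1) + ((eps2 - eps1 - alpha - b) + (lambda - eps2) * p.1) * y + (eps1 - eps2) * y ^+ 2).
  by apply/funext => y; rewrite /fi; ring.
rewrite !quad_deriv; ring.
Qed.
Lemma eig_im (R : realType) (J : 'M[R]_2) (z : R[i]) : \tr J < 0 ->
  eigenvalue (map_mx (fun x : R => (x%:C)%C) J) z -> Re z = 0 -> z = 0.
Proof.
move=> htr.
rewrite eigenvalue_root_char -map_char_poly /root horner_coef size_map_poly size_char_poly.
rewrite !big_ord_recr big_ord0 /= !coef_map /=.
have c2 : (char_poly J)`_2 = 1.
  by have := char_poly_monic J; rewrite monicE /lead_coef size_char_poly => /eqP.
have c1 := char_poly_trace J (isT : (0 < 2)%N).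
rewrite c2 c1 /=.
case: z => x y /= /eqP E hx.
have hx0 : x = 0.
  by move: hx; rewrite -complexRe /= => /eqP; rewrite eq_complex /= => /andP [/eqP].
subst x.
move: E; rewrite expr0 expr1 expr2 !mulr1 add0r.
set c0 := (char_poly J)`_0; set t := \tr J.
simpc. move=> /eqP; rewrite eq_complex /= => /andP [_ /eqP h].
have : t * y = 0 by lra.
move/eqP; rewrite mulf_eq0 => /orP [/eqP ht|/eqP ->]; first by move: htr; rewrite -/t ht ltxx.
by [].
Qed.

Theorem corollary2p5 (R : realType)
  (b beta1 beta2 gamma alpha lambda eps1 eps2 : R)
  (hb : 0 < b) (hbeta1 : 0 < beta1) (hbeta2 : 0 < beta2) (hgamma : 0 < gamma)
  (halpha : 0 < alpha) (hlambda : 0 < lambda) (heps1 : 0 < eps1) (heps2 : 0 < eps2)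
  (p : R * R) :
  interior (@D1 R) p ->
  sys_rest_point b beta1 beta2 gamma alpha lambda eps1 eps2 p ->
  sys_nondegenerate b beta1 beta2 gamma alpha lambda eps1 eps2 p ->
  sys_hyperbolic b beta1 beta2 gamma alpha lambda eps1 eps2 p.
Proof.
case: p => s i; move=> /int_D1 /= [hs [hi hsi]] [Efs Efi] hnd z hz.
have htr : \tr (Defs.jacobian b beta1 beta2 gamma alpha lambda eps1 eps2 (s, i)) < 0.
  rewrite trJ /=.
  move: Efs Efi; rewrite /fs /fi /beta /= => Efs Efi.
  set X := b + gamma + eps2 * (s + i) - eps1 * i.
  have hr : 0 < 1 - s - i by lra.
  have EX : (1 - s - i) * X = beta2 * s + alpha * i
     + (b + gamma + (eps2 - b - (beta1 + beta2) - gamma) * s - gamma * i - eps2 * s ^+ 2 +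
        (eps1 - eps2 - lambda) * i * s)
     + (beta1 * s + (eps2 - eps1 - alpha - b) * i + (lambda - eps2) * i * s + (eps1 - eps2) * i ^+ 2).
    rewrite /X; ring.
  rewrite Efs Efi !addr0 in EX.
  have hX : 0 < X.
    have : 0 < (1 - s - i) * X by rewrite EX; apply: addr_gt0; apply: mulr_gt0.
    by rewrite pmulr_rgt0.
  set T := (X in X < 0).
  have ET : s * i * T = - (i * b * (1 - s)) - i * gamma * (1 - s - i) - beta1 * s ^+ 2
      - i * s * X
      + i * (b + gamma + (eps2 - b - (beta1 + beta2) - gamma) * s - gamma * i - eps2 * s ^+ 2 +
        (eps1 - eps2 - lambda) * i * s)
      + s * (beta1 * s + (eps2 - eps1 - alpha - b) * i + (lambda - eps2) * i * s + (eps1 - eps2) * i ^+ 2).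
    rewrite /T /X; ring.
  rewrite Efs Efi !mulr0 !addr0 in ET.
  have h1 : 0 < i * b * (1 - s) by rewrite !mulr_gt0 //; lra.
  have h2 : 0 < i * gamma * (1 - s - i) by rewrite !mulr_gt0.
  have h3 : 0 < beta1 * s ^+ 2 by rewrite mulr_gt0 // exprn_gt0.
  have h4 : 0 < i * s * X by rewrite !mulr_gt0.
  have : s * i * T < 0 by rewrite ET; lra.
  by rewrite pmulr_rlt0 // mulr_gt0.
apply/eqP => hre.
have := hnd z hz; rewrite (eig_im _ _ _ htr hz hre) eqxx; by [].
Qed.
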